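(* Let $\mathcal{P}=[0,1]^n\cap K$ be a polytope, where $K$ is an affine subspace of $\mathbb{R}^n$. Let $v$ be a vertex of $\mathcal{P}$ and let $F$ be a facet of $\mathcal{P}$ that does not contain $v$. Then there exists a coordinate $i\in[n]$ such that either $v_i>0$ and $x_i=0$ for all $x\in F$, or $v_i<1$ and $x_i=1$ for all $x\in F$. *)

(* Defs.v *)
From mathcomp Require Import all_boot all_order all_algebra.
Set Implicit Arguments. Unset Strict Implicit. Unset Printing Implicit Defensive.
Import Order.TTheory GRing.Theory Num.Theory.
Local Open Scope ring_scope.

Section Defs.
Variables (R : realFieldType) (n : nat).
Notation pt := 'rV[R]_n.

Definition dot (c x : pt) : R := \sum_(i < n) c ord0 i * x ord0 i.

Definition is_affine (K : pt -> Prop) : Prop :=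
  forall x y : pt, K x -> K y -> forall t : R, K ((1 - t) *: x + t *: y).

Definition cube_cap (K : pt -> Prop) (x : pt) : Prop :=
  (forall i : 'I_n, 0 <= x ord0 i <= 1) /\ K x.

(* F is a face of P: intersection of P with a valid supporting hyperplane
   (c = 0, d = 0 gives P itself) *)
Definition is_face (P F : pt -> Prop) : Prop :=
  exists (c : pt) (d : R), (forall x, P x -> dot c x <= d) /\
    (forall x, F x <-> (P x /\ dot c x = d)).

Definition affindep (d : nat) (p : 'I_d.+1 -> pt) : bool :=
  row_free (\matrix_(i < d) (p (lift ord0 i) - p ord0)).

(* S has (affine) dimension d: contains d+1 but not d+2 affinely
   independent points (in particular S is nonempty) *)
Definition has_dim (S : pt -> Prop) (d : nat) : Prop :=
  (exists p : 'I_d.+1 -> pt, (forall i, S (p i)) /\ affindep p) /\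
  (forall p : 'I_d.+2 -> pt, (forall i, S (p i)) -> ~~ affindep p).

Definition is_vertex (P : pt -> Prop) (v : pt) : Prop :=
  is_face P (fun x => x = v).

Definition is_facet (P F : pt -> Prop) : Prop :=
  is_face P F /\ exists d : nat, has_dim P d.+1 /\ has_dim F d.
End Defs.

(* Main.v *)
Require Import Defs.
From mathcomp Require Import all_boot all_order all_algebra.
From Stdlib Require Import Classical.
From mathcomp Require Import ring lra.
Set Implicit Arguments. Unset Strict Implicit.
Import Order.TTheory GRing.Theory Num.Theory.
Local Open Scope ring_scope.

Section Aux.
Variables (R : realFieldType) (n : nat).
Local Notation pt := 'rV[R]_n.

Lemma coordE (a b : R) (x y : pt) i :
  ((a *: x + b *: y) ord0 i) = a * x ord0 i + b * y ord0 i.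
Proof. by rewrite !mxE. Qed.

Lemma dotE (c : pt) (a b : R) (x y : pt) :
  dot c (a *: x + b *: y) = a * dot c x + b * dot c y.
Proof.
rewrite /dot !mulr_sumr -big_split /=; apply: eq_bigr => i _; rewrite coordE; ring.
Qed.

Lemma Pbnd (K : pt -> Prop) x : cube_cap K x ->
  forall i, 0 <= x ord0 i /\ x ord0 i <= 1.
Proof. by move=> [cx _] i; case/andP: (cx i). Qed.

Variables (K : pt -> Prop) (hK : is_affine K) (c : pt) (d : R) (F : pt -> Prop)
  (hF : forall x, F x <-> cube_cap K x /\ dot c x = d).

Lemma Fbnd x : F x -> forall i, 0 <= x ord0 i /\ x ord0 i <= 1.
Proof. by move=> /hF [Px _]; apply: Pbnd Px. Qed.

Lemma mid_in a b : F a -> F b -> F ((1 - 2^-1) *: a + 2^-1 *: b).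
Proof.
move=> Fa Fb; have ba := Fbnd Fa; have bb := Fbnd Fb.
move: Fa Fb => /hF [[ca Ka] da] /hF [[cb Kb] db]; apply/hF; split; [split|].
- move=> i; rewrite coordE; have [? ?] := ba i; have [? ?] := bb i.
  apply/andP; split; lra.
- exact: hK.
- rewrite dotE da db; ring.
Qed.

Lemma build (v : pt) y0 : F y0 ->
  (forall i, (0 < v ord0 i -> exists x, F x /\ 0 < x ord0 i) /\
             (v ord0 i < 1 -> exists x, F x /\ x ord0 i < 1)) ->
  exists y, F y /\ forall i : 'I_n,
    (0 < v ord0 i -> 0 < y ord0 i) /\ (v ord0 i < 1 -> y ord0 i < 1).
Proof.
move=> Fy0 H.
suff: forall k, exists y, F y /\ forall i : 'I_n, (i < k)%N ->
    (0 < v ord0 i -> 0 < y ord0 i) /\ (v ord0 i < 1 -> y ord0 i < 1).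
  by case/(_ n) => y [Fy Hy]; exists y; split=> // i; apply: Hy.
elim=> [|k [y [Fy Hy]]]; first by exists y0.
case: (ltnP k n) => hk; last first.
  by exists y; split=> // i hi; apply: Hy; apply: leq_trans (ltn_ord i) hk.
pose i0 := Ordinal hk.
have [x0 [Fx0 Hx0]] : exists x, F x /\ (0 < v ord0 i0 -> 0 < x ord0 i0).
  case: (ltrP 0 (v ord0 i0)) => h.
    by case: ((H i0).1 h) => x [? ?]; exists x.
  by exists y; split=> // h'; exfalso; lra.
have [x1 [Fx1 Hx1]] : exists x, F x /\ (v ord0 i0 < 1 -> x ord0 i0 < 1).
  case: (ltrP (v ord0 i0) 1) => h.
    by case: ((H i0).2 h) => x [? ?]; exists x.
  by exists y; split=> // h'; exfalso; lra.
exists ((1 - 2^-1) *: ((1 - 2^-1) *: y + 2^-1 *: x0) + 2^-1 *: x1).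
split; first by apply: mid_in => //; apply: mid_in.
move=> i; rewrite !coordE.
have [? ?] := Fbnd Fy i; have [? ?] := Fbnd Fx0 i; have [? ?] := Fbnd Fx1 i.
rewrite ltnS leq_eqVlt => /orP [/eqP ei | lti].
  have -> : i = i0 by apply: val_inj.
  have [? ?] := Fbnd Fy i0; have [? ?] := Fbnd Fx0 i0; have [? ?] := Fbnd Fx1 i0.
  split => hv; [have := Hx0 hv | have := Hx1 hv]; lra.
have [h1 h2] := Hy i lti.
split => hv; [have := h1 hv | have := h2 hv]; lra.
Qed.

Lemma stretch (v y : pt) :
  (forall i, 0 <= v ord0 i /\ v ord0 i <= 1) ->
  (forall i, 0 <= y ord0 i /\ y ord0 i <= 1) ->
  (forall i : 'I_n,
    (0 < v ord0 i -> 0 < y ord0 i) /\ (v ord0 i < 1 -> y ord0 i < 1)) ->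
  exists t : R, 0 < t /\ forall i : 'I_n,
    0 <= (1 - - t) * y ord0 i + - t * v ord0 i <= 1.
Proof.
move=> bv byy Q.
suff: forall k, exists t : R, 0 < t /\ forall i : 'I_n, (i < k)%N ->
    0 <= (1 - - t) * y ord0 i + - t * v ord0 i <= 1.
  by case/(_ n) => t [t0 Ht]; exists t; split=> // i; apply: Ht.
elim=> [|k [t [t0 Ht]]]; first by exists 1; split=> //; lra.
case: (ltnP k n) => hk; last first.
  by exists t; split=> // i hi; apply: Ht; apply: leq_trans (ltn_ord i) hk.
pose i0 := Ordinal hk.
have [s [s0 Hs]] : exists s : R, 0 < s /\
    0 <= (1 - - s) * y ord0 i0 + - s * v ord0 i0 <= 1.
  have [? ?] := bv i0; have [? ?] := byy i0; have [q1 q2] := Q i0.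
  case: (ltgtP (y ord0 i0) (v ord0 i0)) => h.
  - have hy : 0 < y ord0 i0 by apply: q1; lra.
    exists (y ord0 i0); split=> //.
    have p1 := mulr_ge0 (ltW hy) (_ : 0 <= 1 - (v ord0 i0 - y ord0 i0)).
    have p2 := mulr_ge0 (ltW hy) (_ : 0 <= v ord0 i0 - y ord0 i0).
    have := p1 ltac:(lra); have := p2 ltac:(lra) => {p1 p2} p1 p2.
    apply/andP; split; lra.
  - have hy : y ord0 i0 < 1 by apply: q2; lra.
    exists (1 - y ord0 i0); split; first lra.
    have p1 := mulr_ge0 (_ : 0 <= 1 - y ord0 i0) (_ : 0 <= 1 - (y ord0 i0 - v ord0 i0)).
    have p2 := mulr_ge0 (_ : 0 <= 1 - y ord0 i0) (_ : 0 <= y ord0 i0 - v ord0 i0).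
    have := p1 ltac:(lra) ltac:(lra); have := p2 ltac:(lra) ltac:(lra) => {p1 p2} p1 p2.
    apply/andP; split; lra.
  - by exists 1; split; [lra | rewrite h; apply/andP; split; lra].
have mono : forall (t1 t2 : R) (i : 'I_n), 0 < t2 <= t1 ->
    0 <= (1 - - t1) * y ord0 i + - t1 * v ord0 i <= 1 ->
    0 <= (1 - - t2) * y ord0 i + - t2 * v ord0 i <= 1.
  move=> t1 t2 i /andP [h1 h2] /andP [h3 h4].
  have [? ?] := bv i; have [? ?] := byy i.
  case: (lerP (v ord0 i) (y ord0 i)) => h.
    have p1 := mulr_ge0 (_ : 0 <= t2) (_ : 0 <= y ord0 i - v ord0 i).
    have p2 := mulr_ge0 (_ : 0 <= t1 - t2) (_ : 0 <= y ord0 i - v ord0 i).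
    have := p1 ltac:(lra) ltac:(lra); have := p2 ltac:(lra) ltac:(lra) => {p1 p2} p1 p2.
    apply/andP; split; lra.
  have p1 := mulr_ge0 (_ : 0 <= t2) (_ : 0 <= v ord0 i - y ord0 i).
  have p2 := mulr_ge0 (_ : 0 <= t1 - t2) (_ : 0 <= v ord0 i - y ord0 i).
  have := p1 ltac:(lra) ltac:(lra); have := p2 ltac:(lra) ltac:(lra) => {p1 p2} p1 p2.
  apply/andP; split; lra.
have [hts|hst] := lerP t s.
- exists t; split=> // i; rewrite ltnS leq_eqVlt => /orP [/eqP ei | lti]; last exact: Ht.
  have -> : i = i0 by apply: val_inj.
  by apply: (mono s) => //; apply/andP.
- exists s; split=> // i; rewrite ltnS leq_eqVlt => /orP [/eqP ei | lti].
    by have -> : i = i0 by apply: val_inj.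
  by apply: (mono t) => //; [apply/andP; split; [ |apply: ltW] | apply: Ht].
Qed.

End Aux.

Theorem lemma13 (R : realFieldType) (n : nat) (K : 'rV[R]_n -> Prop)
  (hK : is_affine K) (v : 'rV[R]_n) (F : 'rV[R]_n -> Prop) :
  is_vertex (cube_cap K) v -> is_facet (cube_cap K) F -> ~ F v ->
  exists i : 'I_n,
    (0 < v ord0 i /\ forall x, F x -> x ord0 i = 0) \/
    (v ord0 i < 1 /\ forall x, F x -> x ord0 i = 1).
Proof.
move=> [cv [dv [_ hv]]] [[c [d [hc hF]]] [dd [_ [[p [hp _]] _]]]] nFv.
have Pv : cube_cap K v by have := (hv v).1 erefl => -[].
have Fp : F (p ord0) := hp ord0.
have bv := Pbnd Pv.
have cvd : dot c v < d.
  move: (hc v Pv); rewrite le_eqVlt => /orP [/eqP e|] //.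
  by exfalso; apply: nFv; apply/hF.
apply: NNPP => Hn.
have H : forall i, (0 < v ord0 i -> exists x, F x /\ 0 < x ord0 i) /\
             (v ord0 i < 1 -> exists x, F x /\ x ord0 i < 1).
  move=> i; split=> hvi.
  - apply: NNPP => hx; apply: Hn; exists i; left; split=> // x Fx.
    have [? ?] := Fbnd hF Fx i.
    case: (ltrP 0 (x ord0 i)) => h; last lra.
    by exfalso; apply: hx; exists x.
  - apply: NNPP => hx; apply: Hn; exists i; right; split=> // x Fx.
    have [? ?] := Fbnd hF Fx i.
    case: (ltrP (x ord0 i) 1) => h; last lra.
    by exfalso; apply: hx; exists x.
have [y [Fy Qy]] := build hK hF Fp H.
have [t [t0 Ht]] := stretch bv (Fbnd hF Fy) Qy.
move: Fy => /hF [[cy Ky] dy].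
have Pz : cube_cap K ((1 - - t) *: y + (- t) *: v).
  split; last by apply: hK => //; case: Pv.
  by move=> i; rewrite coordE.
have := hc _ Pz; rewrite dotE dy => h.
have pp := mulr_gt0 t0 (_ : 0 < d - dot c v).
have := pp ltac:(lra) => {pp} pp.
lra.
Qed.
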